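(* Let $\mathbb{C}$ be a pointed protomodular category and let $X$ be an object of $\mathbb{C}$ with trivial center such that the generic split extension with kernel $X$ exists. A morphism $u:S\to X$ is a characteristic monomorphism if and only if the composite $c_Xu:S\to[X]$ is a Bourn-normal monomorphism.
   Context: $\mathbb{C}$ is pointed with finite limits; protomodular means the split short five lemma holds. A split extension is $X\xrightarrow{\kappa}A\underset{\beta}{\overset{\alpha}{\rightleftarrows}}B$ with $\alpha\beta=1_B$, $\kappa$ a kernel of $\alpha$. A generic split extension with kernel $X$, written $X\xrightarrow{k}[X]\ltimes X\underset{i}{\overset{p_1}{\rightleftarrows}}[X]$, is a terminal object in the category of split extensions with kernel $X$ and morphisms whose kernel component is $1_X$. The conjugation morphism $c_X:X\to[X]$ is the codomain component of the unique such morphism from $X\xrightarrow{\langle0,1\rangle}X\times X\underset{\langle1,1\rangle}{\overset{\pi_1}{\rightleftarrows}}X$ to the generic one. The center of $X$ is the terminal object among morphisms $g:B\to X$ commuting with $1_X$ (some $\varphi:B\times X\to X$ has $\varphi\langle1,0\rangle=g$, $\varphi\langle0,1\rangle=1_X$); trivial center means it is $0$. A monomorphism $m:S\to Y$ is Bourn-normal if there is an equivalence relation $(R,r_1,r_2)$ on $Y$ and $\tilde m:S\times S\to R$ with $r_1\tilde m=m\pi_1$, $r_2\tilde m=m\pi_2$ and the square $r_1\tilde m=m\pi_1$ a pullback. A morphism $u:S\to X$ is a characteristic monomorphism if for every Bourn-normal monomorphism $n:X\to Y$ the composite $nu$ is a Bourn-normal monomorphism. *)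

(* Defs.v *)
Set Implicit Arguments.
Unset Strict Implicit.

Record Cat := {
  ob :> Type;
  hom : ob -> ob -> Type;
  idm : forall A, hom A A;
  comp : forall A B C, hom B C -> hom A B -> hom A C;
  comp_assoc : forall A B C D (h : hom C D) (g : hom B C) (f : hom A B),
      comp h (comp g f) = comp (comp h g) f;
  comp_id_l : forall A B (f : hom A B), comp (idm B) f = f;
  comp_id_r : forall A B (f : hom A B), comp f (idm A) = f }.

Arguments hom {c} _ _.
Arguments idm {c} A.
Arguments comp {c A B C} _ _.
Notation "g ∘ f" := (comp g f) (at level 40, left associativity).

Record Pointed (C : Cat) := {
  zob : C;
  to_zero : forall A : C, hom A zob;
  from_zero : forall A : C, hom zob A;
  to_zero_uniq : forall (A : C) (f : hom A zob), f = to_zero A;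
  from_zero_uniq : forall (A : C) (f : hom zob A), f = from_zero A }.

Record Products (C : Cat) := {
  prod : C -> C -> C;
  pr1 : forall A B : C, hom (prod A B) A;
  pr2 : forall A B : C, hom (prod A B) B;
  pair : forall T A B : C, hom T A -> hom T B -> hom T (prod A B);
  pair_pr1 : forall (T A B : C) (f : hom T A) (g : hom T B), pr1 A B ∘ pair f g = f;
  pair_pr2 : forall (T A B : C) (f : hom T A) (g : hom T B), pr2 A B ∘ pair f g = g;
  pair_uniq : forall (T A B : C) (h : hom T (prod A B)),
      h = pair (pr1 A B ∘ h) (pr2 A B ∘ h) }.
Arguments pair {C} p {T A B} _ _.

(** Chosen equalizers (with the zero object and products: all finite limits). *)
Record Equalizers (C : Cat) := {
  eqz : forall A B : C, hom A B -> hom A B -> C;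
  eqz_in : forall (A B : C) (f g : hom A B), hom (eqz f g) A;
  eqz_eq : forall (A B : C) (f g : hom A B), f ∘ eqz_in f g = g ∘ eqz_in f g;
  eqz_lift : forall (A B : C) (f g : hom A B) (T : C) (h : hom T A),
      f ∘ h = g ∘ h -> exists k : hom T (eqz f g), eqz_in f g ∘ k = h;
  eqz_mono : forall (A B : C) (f g : hom A B) (T : C) (k k' : hom T (eqz f g)),
      eqz_in f g ∘ k = eqz_in f g ∘ k' -> k = k' }.

Section Notions.
Context {C : Cat}.

Definition mono {S Y : C} (m : hom S Y) : Prop :=
  forall (T : C) (f g : hom T S), m ∘ f = m ∘ g -> f = g.

Definition iso {A B : C} (f : hom A B) : Prop :=
  exists g : hom B A, g ∘ f = idm A /\ f ∘ g = idm B.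

Variable Z : Pointed C.

Definition zmor (A B : C) : hom A B := from_zero Z B ∘ to_zero Z A.

Definition is_kernel {X A B : C} (k : hom X A) (a : hom A B) : Prop :=
  a ∘ k = zmor X B /\
  forall (T : C) (h : hom T A), a ∘ h = zmor T B -> exists! x : hom T X, k ∘ x = h.

Definition split_ext {X A B : C} (k : hom X A) (a : hom A B) (b : hom B A) : Prop :=
  a ∘ b = idm B /\ is_kernel k a.

Definition split_ext_morph {X A B X' A' B' : C}
  (k : hom X A) (a : hom A B) (b : hom B A)
  (k' : hom X' A') (a' : hom A' B') (b' : hom B' A')
  (fX : hom X X') (fA : hom A A') (fB : hom B B') : Prop :=
  fA ∘ k = k' ∘ fX /\ a' ∘ fA = fB ∘ a /\ fA ∘ b = b' ∘ fB.

(** protomodular: the split short five lemma holds *)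
Definition protomodular : Prop :=
  forall (X A B X' A' B' : C)
    (k : hom X A) (a : hom A B) (b : hom B A)
    (k' : hom X' A') (a' : hom A' B') (b' : hom B' A')
    (fX : hom X X') (fA : hom A A') (fB : hom B B'),
    split_ext k a b -> split_ext k' a' b' ->
    split_ext_morph k a b k' a' b' fX fA fB ->
    iso fX -> iso fB -> iso fA.

Definition is_generic_split_ext {X GA GB : C}
  (k : hom X GA) (p1 : hom GA GB) (i : hom GB GA) : Prop :=
  split_ext k p1 i /\
  forall (A B : C) (kk : hom X A) (a : hom A B) (b : hom B A),
    split_ext kk a b ->
    (exists (fA : hom A GA) (fB : hom B GB),
        split_ext_morph kk a b k p1 i (idm X) fA fB) /\
    (forall (fA fA' : hom A GA) (fB fB' : hom B GB),
        split_ext_morph kk a b k p1 i (idm X) fA fB ->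
        split_ext_morph kk a b k p1 i (idm X) fA' fB' ->
        fA = fA' /\ fB = fB').

Variable P : Products C.

Definition is_conjugation {X GA GB : C}
  (k : hom X GA) (p1 : hom GA GB) (i : hom GB GA) (c : hom X GB) : Prop :=
  exists fA : hom (prod P X X) GA,
    split_ext_morph (pair P (zmor X X) (idm X)) (pr1 P X X) (pair P (idm X) (idm X))
                    k p1 i (idm X) fA c.

Definition commutes_with_id {B X : C} (g : hom B X) : Prop :=
  exists phi : hom (prod P B X) X,
    phi ∘ pair P (idm B) (zmor B X) = g /\ phi ∘ pair P (zmor X B) (idm X) = idm X.

Definition is_center {Zc X : C} (z : hom Zc X) : Prop :=
  commutes_with_id z /\
  forall (B : C) (g : hom B X), commutes_with_id g -> exists! h : hom B Zc, z ∘ h = g.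

Definition trivial_center (X : C) : Prop := is_center (zmor (zob Z) X).

Definition equiv_rel {R Y : C} (r1 r2 : hom R Y) : Prop :=
  (forall (T : C) (f g : hom T R), r1 ∘ f = r1 ∘ g -> r2 ∘ f = r2 ∘ g -> f = g) /\
  (exists d : hom Y R, r1 ∘ d = idm Y /\ r2 ∘ d = idm Y) /\
  (exists s : hom R R, r1 ∘ s = r2 /\ r2 ∘ s = r1) /\
  (forall (T : C) (x y : hom T R), r2 ∘ x = r1 ∘ y ->
     exists t : hom T R, r1 ∘ t = r1 ∘ x /\ r2 ∘ t = r2 ∘ y).

Definition Bourn_normal {S Y : C} (m : hom S Y) : Prop :=
  mono m /\
  exists (R : C) (r1 r2 : hom R Y) (mt : hom (prod P S S) R),
    equiv_rel r1 r2 /\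
    r1 ∘ mt = m ∘ pr1 P S S /\ r2 ∘ mt = m ∘ pr2 P S S /\
    (forall (T : C) (x : hom T R) (y : hom T S), r1 ∘ x = m ∘ y ->
       exists! h : hom T (prod P S S), mt ∘ h = x /\ pr1 P S S ∘ h = y).

Definition characteristic {S X : C} (u : hom S X) : Prop :=
  forall (Y : C) (n : hom X Y), Bourn_normal n -> Bourn_normal (n ∘ u).

End Notions.

(* Main.v *)
Require Import Defs.

Section Basic.
Context {C : Cat} (Z : Pointed C) (P : Products C).

Lemma zl {A B B' : C} (f : hom B B') : f ∘ zmor Z A B = zmor Z A B'.
Proof. unfold zmor. rewrite comp_assoc. f_equal. apply from_zero_uniq. Qed.
Lemma zr {A B D : C} (g : hom A B) : zmor Z B D ∘ g = zmor Z A D.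
Proof. unfold zmor. rewrite <- comp_assoc. f_equal. apply to_zero_uniq. Qed.
Lemma pp1' {T A B W : C} (z : hom A W) (f : hom T A) (g : hom T B) :
  z ∘ pr1 P A B ∘ pair P f g = z ∘ f.
Proof. rewrite <- comp_assoc, pair_pr1. reflexivity. Qed.
Lemma pp2' {T A B W : C} (z : hom B W) (f : hom T A) (g : hom T B) :
  z ∘ pr2 P A B ∘ pair P f g = z ∘ g.
Proof. rewrite <- comp_assoc, pair_pr2. reflexivity. Qed.
Lemma pair_ext {T A B : C} (h h' : hom T (prod P A B)) :
  pr1 P A B ∘ h = pr1 P A B ∘ h' -> pr2 P A B ∘ h = pr2 P A B ∘ h' -> h = h'.
Proof. intros H1 H2. rewrite (pair_uniq h), (pair_uniq h'), H1, H2. reflexivity. Qed.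
Lemma pc {T T' A B : C} (f : hom T A) (g : hom T B) (h : hom T' T) :
  pair P f g ∘ h = pair P (f ∘ h) (g ∘ h).
Proof. apply pair_ext; rewrite comp_assoc, ?pair_pr1, ?pair_pr2; reflexivity. Qed.
Lemma pc' {T T' A B W : C} (z : hom (prod P A B) W) (f : hom T A) (g : hom T B) (h : hom T' T) :
  z ∘ pair P f g ∘ h = z ∘ pair P (f ∘ h) (g ∘ h).
Proof. rewrite <- comp_assoc, pc. reflexivity. Qed.
Lemma pair_pr {A B : C} : pair P (pr1 P A B) (pr2 P A B) = idm _.
Proof. apply pair_ext; rewrite ?pair_pr1, ?pair_pr2, comp_id_r; reflexivity. Qed.
Lemma ext_l {A B D W : C} (a : hom B D) (b : hom A B) r (H : a ∘ b = r) (z : hom D W) :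
  z ∘ a ∘ b = z ∘ r.
Proof. rewrite <- comp_assoc, H. reflexivity. Qed.
Lemma ext_l3 {A B D F W : C} (a : hom D F) (b : hom B D) (c : hom A B) r (H : a ∘ b ∘ c = r) (z : hom F W) :
  z ∘ a ∘ b ∘ c = z ∘ r.
Proof. rewrite <- H, !comp_assoc. reflexivity. Qed.
Lemma ext_l4 {A B D F G W : C} (a : hom F G) (b : hom D F) (c : hom B D) (d : hom A B) r (H : a ∘ b ∘ c ∘ d = r) (z : hom G W) :
  z ∘ a ∘ b ∘ c ∘ d = z ∘ r.
Proof. rewrite <- H, !comp_assoc. reflexivity. Qed.
End Basic.

Global Hint Rewrite @comp_id_l @comp_id_r @comp_assoc @zl @zr @pair_pr1 @pair_pr2 @pp1' @pp2' @pc @pc' @pair_pr : cat.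
Ltac simp := autorewrite with cat.
Ltac rw H := repeat first [rewrite H | rewrite (ext_l _ _ _ H) | rewrite (ext_l3 _ _ _ _ H) | rewrite (ext_l4 _ _ _ _ _ H)]; simp.
Ltac rws H := simp; rw H.


Section Gen.
Context {C : Cat} (Z : Pointed C) (P : Products C) (E : Equalizers C).

Lemma kernel_mono {X A B : C} (k : hom X A) (a : hom A B) : is_kernel Z k a -> mono k.
Proof.
  intros [H0 H] T f g Hfg.
  assert (Ha : a ∘ (k ∘ f) = zmor Z T B) by (rewrite comp_assoc, H0; simp; reflexivity).
  destruct (H T _ Ha) as [x [_ Hu]].
  rewrite <- (Hu f eq_refl), <- (Hu g (eq_sym Hfg)). reflexivity.
Qed.

Lemma split_ext_prod (B X : C) (s : hom B X) :
  split_ext Z (pair P (zmor Z X B) (idm X)) (pr1 P B X) (pair P (idm B) s).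
Proof.
  split; [simp; reflexivity|]. split; [simp; reflexivity|].
  intros T h Hh. exists (pr2 P B X ∘ h). split.
  - apply pair_ext; simp; [rewrite Hh|]; reflexivity.
  - intros x' Hx. rewrite <- Hx. simp. reflexivity.
Qed.

Lemma eqz_eq' {A B W : C} (f g : hom A B) (z : hom W (eqz E f g)) :
  f ∘ eqz_in E f g ∘ z = g ∘ eqz_in E f g ∘ z.
Proof. rewrite eqz_eq. reflexivity. Qed.

Lemma split_ext_pb {X A B B' : C} (k : hom X A) (a : hom A B) (b : hom B A)
  (f : hom B' B) (s : hom B' A) :
  split_ext Z k a b -> a ∘ s = f ->
  forall kl sl,
  eqz_in E (f ∘ pr1 P B' A) (a ∘ pr2 P B' A) ∘ kl = pair P (zmor Z X B') k ->
  eqz_in E (f ∘ pr1 P B' A) (a ∘ pr2 P B' A) ∘ sl = pair P (idm B') s ->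
  split_ext Z kl (pr1 P B' A ∘ eqz_in E (f ∘ pr1 P B' A) (a ∘ pr2 P B' A)) sl.
Proof.
  intros [Hab [Hk0 Hk]] Has kl sl Hkl Hsl.
  set (e := eqz_in E (f ∘ pr1 P B' A) (a ∘ pr2 P B' A)) in *.
  assert (Heq : f ∘ pr1 P B' A ∘ e = a ∘ pr2 P B' A ∘ e) by apply eqz_eq.
  split; [rewrite <- comp_assoc, Hsl; simp; reflexivity|].
  split; [rewrite <- comp_assoc, Hkl; simp; reflexivity|].
  intros T h Hh.
  assert (Ha : a ∘ (pr2 P B' A ∘ e ∘ h) = zmor Z T B).
  { rewrite !comp_assoc, <- Heq, <- !comp_assoc, (comp_assoc _ e h), Hh. simp. reflexivity. }
  destruct (Hk T _ Ha) as [x [Hx Hu]].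
  exists x. split.
  - apply eqz_mono; fold e. rewrite comp_assoc, Hkl. simp.
    apply pair_ext; simp; [rewrite Hh|rewrite Hx]; simp; reflexivity.
  - intros x' Hx'. apply Hu. rewrite <- Hx'. simp. rws Hkl. reflexivity.
Qed.

Lemma morph_comp {X A B X' A' B' X'' A'' B'' : C}
  (k : hom X A) (a : hom A B) (b : hom B A)
  (k' : hom X' A') (a' : hom A' B') (b' : hom B' A')
  (k'' : hom X'' A'') (a'' : hom A'' B'') (b'' : hom B'' A'')
  fX fA fB gX gA gB :
  split_ext_morph k a b k' a' b' fX fA fB ->
  split_ext_morph k' a' b' k'' a'' b'' gX gA gB ->
  split_ext_morph k a b k'' a'' b'' (gX ∘ fX) (gA ∘ fA) (gB ∘ fB).
Proof.
  intros [H1 [H2 H3]] [G1 [G2 G3]]. split; [|split].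
  - rewrite <- comp_assoc, H1, comp_assoc, G1, comp_assoc. reflexivity.
  - rewrite comp_assoc, G2, <- comp_assoc, H2, comp_assoc. reflexivity.
  - rewrite <- comp_assoc, H3, comp_assoc, G3, comp_assoc. reflexivity.
Qed.


Lemma lift2 {B' A B : C} (f : hom B' B) (a : hom A B) {T : C} (u : hom T B') (v : hom T A) :
  f ∘ u = a ∘ v -> exists l, eqz_in E (f ∘ pr1 P B' A) (a ∘ pr2 P B' A) ∘ l = pair P u v.
Proof. intros H. apply eqz_lift. simp. exact H. Qed.

Lemma emono {A B T : C} (f g : hom A B) (k k' : hom T (eqz E f g)) :
  eqz_in E f g ∘ k = eqz_in E f g ∘ k' -> k = k'.
Proof. apply eqz_mono. Qed.

Lemma pb_of_morph (Hprot : protomodular Z) {X A B A' B' : C}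
  (k : hom X A) (a : hom A B) (b : hom B A)
  (k' : hom X A') (a' : hom A' B') (b' : hom B' A') fA fB :
  split_ext Z k a b -> split_ext Z k' a' b' ->
  split_ext_morph k' a' b' k a b (idm X) fA fB ->
  forall (T : C) (x : hom T A) (y : hom T B'), a ∘ x = fB ∘ y ->
  exists! h, fA ∘ h = x /\ a' ∘ h = y.
Proof.
  intros HS HS' [M1 [M2 M3]] T x y Hxy.
  pose proof HS as [Hab [Hk0 _]]. pose proof HS' as [Hab' [Hk0' _]].
  destruct (lift2 fB a (zmor Z X B') k) as [kl Hkl]. { simp. now rewrite Hk0. }
  destruct (lift2 fB a (idm B') (b ∘ fB)) as [sl Hsl]. { simp. now rws Hab. }
  destruct (lift2 fB a a' fA) as [j Hj]. { now rewrite M2. }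
  destruct (lift2 fB a y x) as [l Hl]. { now rewrite Hxy. }
  set (e := eqz_in E (fB ∘ pr1 P B' A) (a ∘ pr2 P B' A)) in *.
  assert (HP := split_ext_pb k a b fB (b ∘ fB) HS ltac:(simp; now rws Hab) kl sl Hkl Hsl).
  fold e in HP.
  assert (Mj : split_ext_morph k' a' b' kl (pr1 P B' A ∘ e) sl (idm X) j (idm B')).
  { split; [|split].
    - apply emono; fold e. simp. rws Hj. rws Hkl. rewrite Hk0', M1. simp. reflexivity.
    - simp. rws Hj. reflexivity.
    - apply emono; fold e. simp. rws Hj. rws Hsl. rewrite Hab', M3. reflexivity. }
  assert (Iso : iso (idm X)) by (exists (idm X); simp; auto).
  assert (IsoB : iso (idm B')) by (exists (idm B'); simp; auto).
  destruct (Hprot _ _ _ _ _ _ _ _ _ _ _ _ _ _ _ HS' HP Mj Iso IsoB) as [g [Hg1 Hg2]].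
  exists (g ∘ l). split; [split|].
  - transitivity (pr2 P B' A ∘ e ∘ j ∘ g ∘ l).
    + rws Hj. reflexivity.
    + rws Hg2. rws Hl. reflexivity.
  - transitivity (pr1 P B' A ∘ e ∘ j ∘ g ∘ l).
    + rws Hj. reflexivity.
    + rws Hg2. rws Hl. reflexivity.
  - intros h [H1 H2].
    assert (j ∘ h = l).
    { apply emono; fold e. rws Hj. rws Hl. now rewrite H1, H2. }
    subst l. simp. rws Hg1. reflexivity.
Qed.


Lemma zob_from (A : C) : zmor Z (zob Z) A = from_zero Z A.
Proof. unfold zmor. rewrite <- (to_zero_uniq (p:=Z) (idm (zob Z))). apply comp_id_r. Qed.

Lemma mono_of_ker0 (Hprot : protomodular Z) {A B : C} (f : hom A B) :
  (forall (T : C) (h : hom T A), f ∘ h = zmor Z T B -> h = zmor Z T A) -> mono f.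
Proof.
  intros Hf.
  destruct (lift2 f f (idm A) (idm A)) as [d Hd]. { reflexivity. }
  set (e := eqz_in E (f ∘ pr1 P A A) (f ∘ pr2 P A A)) in *.
  assert (Heq : f ∘ pr1 P A A ∘ e = f ∘ pr2 P A A ∘ e) by apply eqz_eq.
  assert (S1 : split_ext Z (from_zero Z _) (pr1 P A A ∘ e) d).
  { split; [rws Hd; reflexivity|]. split.
    - rewrite zob_from. apply from_zero_uniq.
    - intros T h Hh. exists (to_zero Z T). split.
      + change (zmor Z T _ = h). symmetry. apply emono; fold e. simp.
        apply pair_ext; simp; [assumption|].
        apply Hf. simp. rewrite <- Heq. rws Hh. reflexivity.
      + intros x' _. symmetry. apply to_zero_uniq. }
  assert (S2 : split_ext Z (from_zero Z A) (idm A) (idm A)).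
  { split; [simp; reflexivity|]. split.
    - rewrite zob_from. simp. reflexivity.
    - intros T h Hh. exists (to_zero Z T). split.
      + autorewrite with cat in Hh. rewrite Hh. reflexivity.
      + intros x' _. symmetry. apply to_zero_uniq. }
  assert (M : split_ext_morph (from_zero Z A) (idm A) (idm A) (from_zero Z _) (pr1 P A A ∘ e) d
                (idm _) d (idm A)).
  { split; [|split]; simp.
    - rewrite (from_zero_uniq (d ∘ from_zero Z A)). reflexivity.
    - rws Hd. reflexivity.
    - reflexivity. }
  assert (Iso : iso (idm (zob Z))) by (exists (idm _); simp; auto).
  assert (IsoB : iso (idm A)) by (exists (idm A); simp; auto).
  destruct (Hprot _ _ _ _ _ _ _ _ _ _ _ _ _ _ _ S2 S1 M Iso IsoB) as [g [Hg1 Hg2]].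
  intros T x y Hxy.
  destruct (lift2 f f x y Hxy) as [l Hl]. fold e in Hl.
  transitivity (pr1 P A A ∘ e ∘ d ∘ g ∘ l); [rws Hg2; rws Hl; reflexivity|].
  transitivity (pr2 P A A ∘ e ∘ d ∘ g ∘ l); [rws Hd; reflexivity|].
  rws Hg2; rws Hl; reflexivity.
Qed.

Lemma center_zero {X B : C} (g : hom B X) :
  trivial_center Z P X -> commutes_with_id Z P g -> g = zmor Z B X.
Proof.
  intros [_ Hc] Hg. destruct (Hc B g Hg) as [h [Hh _]]. rewrite <- Hh. simp. reflexivity.
Qed.

End Gen.
Arguments morph_comp {C X A B X' A' B' X'' A'' B'' k a b k' a' b' k'' a'' b'' fX fA fB gX gA gB} _ _.

Section Main.
Context {C : Cat} (Z : Pointed C) (P : Products C) (E : Equalizers C)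
  (Hprot : protomodular Z)
  (X : C) (Hcen : trivial_center Z P X)
  (GA GB : C) (k : hom X GA) (p1 : hom GA GB) (i : hom GB GA)
  (Hgen : is_generic_split_ext Z k p1 i)
  (c : hom X GB) (Hc : is_conjugation Z P k p1 i c).

Lemma HG : split_ext Z k p1 i.
Proof. apply Hgen. Qed.

Lemma kmono : mono k.
Proof. destruct HG as [_ HK]. exact (kernel_mono Z _ _ HK). Qed.

Lemma gen_ex {A B : C} (kk : hom X A) (a : hom A B) (b : hom B A) :
  split_ext Z kk a b -> exists fA fB, split_ext_morph kk a b k p1 i (idm X) fA fB.
Proof. intros H. apply (proj2 Hgen _ _ _ _ _ H). Qed.

Lemma gen_uniq {A B : C} (kk : hom X A) (a : hom A B) (b : hom B A) fA fB fA' fB' :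
  split_ext Z kk a b ->
  split_ext_morph kk a b k p1 i (idm X ∘ idm X) fA fB ->
  split_ext_morph kk a b k p1 i (idm X) fA' fB' -> fB = fB'.
Proof.
  intros H M M'. rewrite comp_id_l in M.
  apply (proj2 (proj2 Hgen _ _ _ _ _ H) _ _ _ _ M M').
Qed.

Lemma c_mono : mono c.
Proof.
  apply (mono_of_ker0 Z P E Hprot). intros T m Hm. apply (center_zero Z P); [exact Hcen|].
  destruct Hc as [fA0 [M1 [M2 M3]]].
  destruct HG as [Hi [Hk0 Hk]].
  assert (Hp : p1 ∘ (fA0 ∘ pair P (m ∘ pr1 P T X) (pr2 P T X)) = zmor Z _ GB).
  { rws M2. rws Hm. reflexivity. }
  destruct (Hk _ _ Hp) as [phi [Hphi _]].
  assert (phi01 : phi ∘ pair P (zmor Z X T) (idm X) = idm X).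
  { apply kmono. rws Hphi. rws M1. reflexivity. }
  assert (phi1m : phi ∘ pair P (idm T) m = zmor Z T X).
  { apply kmono. rws Hphi. transitivity (fA0 ∘ pair P (idm X) (idm X) ∘ m); [simp; reflexivity|].
    rewrite M3. rws Hm. reflexivity. }
  assert (Mo : split_ext_morph (pair P (zmor Z X T) (idm X)) (pr1 P T X) (pair P (idm T) m)
                 (pair P (zmor Z X T) (idm X)) (pr1 P T X) (pair P (idm T) (zmor Z T X))
                 (idm X) (pair P (pr1 P T X) phi) (idm T)).
  { split; [|split]; simp.
    - rewrite phi01. reflexivity.
    - reflexivity.
    - rewrite phi1m. reflexivity. }
  assert (Iso : iso (idm X)) by (exists (idm _); simp; auto).
  assert (IsoB : iso (idm T)) by (exists (idm _); simp; auto).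
  destruct (Hprot _ _ _ _ _ _ _ _ _ _ _ _ _ _ _ (split_ext_prod Z P T X m)
              (split_ext_prod Z P T X (zmor Z T X)) Mo Iso IsoB) as [g [Hg1 Hg2]].
  exists (pr2 P T X ∘ g). split.
  - transitivity (pr2 P T X ∘ g ∘ pair P (pr1 P T X) phi ∘ pair P (idm T) m).
    + simp. rewrite phi1m. reflexivity.
    + rw Hg1. reflexivity.
  - transitivity (pr2 P T X ∘ g ∘ pair P (pr1 P T X) phi ∘ pair P (zmor Z X T) (idm X)).
    + simp. rewrite phi01. reflexivity.
    + rw Hg1. reflexivity.
Qed.


Lemma id_morph {A B : C} (kk : hom X A) (a : hom A B) (b : hom B A) :
  split_ext_morph kk a b kk a b (idm X) (idm A) (idm B).
Proof. split; [|split]; simp; reflexivity. Qed.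

Lemma fixid {A B : C} (kk : hom X A) (a : hom A B) (b : hom B A) fA fB :
  split_ext_morph kk a b k p1 i (idm X ∘ idm X) fA fB ->
  split_ext_morph kk a b k p1 i (idm X) fA fB.
Proof. rewrite comp_id_l. auto. Qed.

Lemma c_normal : Bourn_normal P c.
Proof.
  destruct Hc as [fA0 MA]. pose proof MA as [M1 [M2 M3]].
  pose proof HG as [Hi [Hk0 Hk]].
  destruct (lift2 P E p1 p1 (zmor Z X GA) k) as [kl Hkl]. { simp. rewrite Hk0. reflexivity. }
  destruct (lift2 P E p1 p1 (idm GA) (idm GA)) as [dl Hdl]. { reflexivity. }
  pose proof (split_ext_pb Z P E k p1 i p1 (idm GA) HG (comp_id_r _) kl dl Hkl Hdl) as HW.
  set (e := eqz_in E (p1 ∘ pr1 P GA GA) (p1 ∘ pr2 P GA GA)) in *.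
  assert (Heq : p1 ∘ pr1 P GA GA ∘ e = p1 ∘ pr2 P GA GA ∘ e) by apply eqz_eq.
  destruct (gen_ex _ _ _ HW) as [fE [q ME]].
  pose proof ME as [E1 [E2 E3]]. autorewrite with cat in E1, E2, E3.
  assert (qk : q ∘ k = c).
  { destruct (lift2 P E p1 p1 (k ∘ pr1 P X X) (k ∘ pr2 P X X)) as [jk Hjk].
    { simp. rewrite Hk0. simp. reflexivity. }
    fold e in Hjk.
    assert (Mk : split_ext_morph (pair P (zmor Z X X) (idm X)) (pr1 P X X) (pair P (idm X) (idm X))
                   kl (pr1 P GA GA ∘ e) dl (idm X) jk k).
    { split; [|split].
      - apply emono; fold e. rws Hjk. rws Hkl. reflexivity.
      - rws Hjk. reflexivity.
      - apply emono; fold e. rws Hjk. rws Hdl. reflexivity. }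
    exact (gen_uniq _ _ _ _ _ _ _ (split_ext_prod Z P X X (idm X)) (morph_comp Mk ME) MA). }
  assert (qi : q ∘ i = idm GB).
  { destruct (lift2 P E p1 p1 (i ∘ p1) (idm GA)) as [ji Hji]. { rws Hi. reflexivity. }
    fold e in Hji.
    assert (Mi : split_ext_morph k p1 i kl (pr1 P GA GA ∘ e) dl (idm X) ji i).
    { split; [|split].
      - apply emono; fold e. rws Hji. rws Hk0. rws Hkl. reflexivity.
      - rws Hji. reflexivity.
      - apply emono; fold e. rws Hji. rws Hi. rws Hdl. reflexivity. }
    exact (gen_uniq _ _ _ _ _ _ _ HG (morph_comp Mi ME) (id_morph k p1 i)). }
  assert (qfA : q ∘ fA0 = c ∘ pr2 P X X).
  { destruct (lift2 P E p1 p1 (fA0 ∘ pr1 P (prod P X X) X)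
                (fA0 ∘ pair P (pr1 P X X ∘ pr1 P (prod P X X) X) (pr2 P (prod P X X) X))) as [j3 Hj3].
    { rws M2. reflexivity. }
    fold e in Hj3.
    assert (Ma : split_ext_morph (pair P (zmor Z X (prod P X X)) (idm X)) (pr1 P (prod P X X) X)
                   (pair P (idm _) (pr2 P X X)) kl (pr1 P GA GA ∘ e) dl (idm X) j3 fA0).
    { split; [|split].
      - apply emono; fold e. rws Hj3. rws Hkl. rws M1. reflexivity.
      - rws Hj3. reflexivity.
      - apply emono; fold e. rws Hj3. rws Hdl. reflexivity. }
    assert (Mb : split_ext_morph (pair P (zmor Z X (prod P X X)) (idm X)) (pr1 P (prod P X X) X)
                   (pair P (idm _) (pr2 P X X))
                   (pair P (zmor Z X X) (idm X)) (pr1 P X X) (pair P (idm X) (idm X))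
                   (idm X) (pair P (pr2 P X X ∘ pr1 P (prod P X X) X) (pr2 P (prod P X X) X)) (pr2 P X X)).
    { split; [|split]; simp; reflexivity. }
    exact (gen_uniq _ _ _ _ _ _ _ (split_ext_prod Z P (prod P X X) X (pr2 P X X))
             (morph_comp Ma ME) (fixid _ _ _ _ _ (morph_comp Mb MA))). }
  assert (qfE : q ∘ fE = q ∘ pr2 P GA GA ∘ e).
  {
    destruct (lift2 P E (p1 ∘ pr1 P GA GA ∘ e) p1 (zmor Z X (eqz E (p1 ∘ pr1 P GA GA) (p1 ∘ pr2 P GA GA))) k) as [kl' Hkl'].
    { simp. rewrite Hk0. reflexivity. }
    destruct (lift2 P E (p1 ∘ pr1 P GA GA ∘ e) p1 (idm (eqz E (p1 ∘ pr1 P GA GA) (p1 ∘ pr2 P GA GA))) (pr2 P GA GA ∘ e)) as [sl' Hsl'].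
    { simp. exact Heq. }
    pose proof (split_ext_pb Z P E k p1 i (p1 ∘ pr1 P GA GA ∘ e) (pr2 P GA GA ∘ e) HG
                  ltac:(simp; symmetry; exact Heq) kl' sl' Hkl' Hsl') as HE'.
    set (e' := eqz_in E (p1 ∘ pr1 P GA GA ∘ e ∘ pr1 P (eqz E (p1 ∘ pr1 P GA GA) (p1 ∘ pr2 P GA GA)) GA) (p1 ∘ pr2 P (eqz E (p1 ∘ pr1 P GA GA) (p1 ∘ pr2 P GA GA)) GA)) in *.
    assert (Heq' : p1 ∘ pr1 P GA GA ∘ e ∘ pr1 P (eqz E (p1 ∘ pr1 P GA GA) (p1 ∘ pr2 P GA GA)) GA ∘ e' = p1 ∘ pr2 P (eqz E (p1 ∘ pr1 P GA GA) (p1 ∘ pr2 P GA GA)) GA ∘ e').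
    { pose proof (eqz_eq' E (p1 ∘ pr1 P GA GA ∘ e ∘ pr1 P (eqz E (p1 ∘ pr1 P GA GA) (p1 ∘ pr2 P GA GA)) GA) (p1 ∘ pr2 P (eqz E (p1 ∘ pr1 P GA GA) (p1 ∘ pr2 P GA GA)) GA) (idm _)) as H.
      fold e' in H. autorewrite with cat in H. exact H. }
    destruct (lift2 P E p1 p1 (pr1 P GA GA ∘ e ∘ pr1 P (eqz E (p1 ∘ pr1 P GA GA) (p1 ∘ pr2 P GA GA)) GA ∘ e') (pr2 P (eqz E (p1 ∘ pr1 P GA GA) (p1 ∘ pr2 P GA GA)) GA ∘ e')) as [v Hv].
    { simp. exact Heq'. }
    fold e in Hv.
    destruct (lift2 P E p1 p1 (fE ∘ pr1 P (eqz E (p1 ∘ pr1 P GA GA) (p1 ∘ pr2 P GA GA)) GA ∘ e') (fE ∘ v)) as [j6 Hj6].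
    { rws E2. rws Hv. reflexivity. }
    fold e in Hj6.
    destruct (lift2 P E p1 p1 (pr2 P GA GA ∘ e ∘ pr1 P (eqz E (p1 ∘ pr1 P GA GA) (p1 ∘ pr2 P GA GA)) GA ∘ e') (pr2 P (eqz E (p1 ∘ pr1 P GA GA) (p1 ∘ pr2 P GA GA)) GA ∘ e')) as [j7 Hj7].
    { simp. rewrite <- Heq. exact Heq'. }
    fold e in Hj7.
    assert (vkl : v ∘ kl' = kl).
    { apply emono; fold e. rws Hv. rws Hkl'. rws Hkl. reflexivity. }
    assert (vsl : v ∘ sl' = idm (eqz E (p1 ∘ pr1 P GA GA) (p1 ∘ pr2 P GA GA))).
    { apply emono; fold e. rws Hv. rws Hsl'. symmetry. apply pair_uniq. }
    assert (Ma : split_ext_morph kl' (pr1 P (eqz E (p1 ∘ pr1 P GA GA) (p1 ∘ pr2 P GA GA)) GA ∘ e') sl' kl (pr1 P GA GA ∘ e) dl (idm X) j6 fE).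
    { split; [|split].
      - apply emono; fold e. rws Hj6. rws Hkl'. rws vkl. rws E1. rws Hkl. reflexivity.
      - rws Hj6. reflexivity.
      - apply emono; fold e. rws Hj6. rws Hsl'. rws vsl. rws Hdl. reflexivity. }
    assert (Mb : split_ext_morph kl' (pr1 P (eqz E (p1 ∘ pr1 P GA GA) (p1 ∘ pr2 P GA GA)) GA ∘ e') sl' kl (pr1 P GA GA ∘ e) dl (idm X) j7
                   (pr2 P GA GA ∘ e)).
    { split; [|split].
      - apply emono; fold e. rws Hj7. rws Hkl'. rws Hkl. reflexivity.
      - rws Hj7. reflexivity.
      - apply emono; fold e. rws Hj7. rws Hsl'. rws Hdl. reflexivity. }
    pose proof (gen_uniq _ _ _ _ _ _ _ HE' (morph_comp Ma ME) (fixid _ _ _ _ _ (morph_comp Mb ME))) as H.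
    rewrite H. simp. reflexivity. }
  assert (jm : mono (pair P p1 q)).
  { apply (mono_of_ker0 Z P E Hprot). intros T h Hh.
    assert (H1 : p1 ∘ h = zmor Z T GB).
    { transitivity (pr1 P GB GB ∘ pair P p1 q ∘ h); [simp; reflexivity|]. rw Hh. reflexivity. }
    assert (H2 : q ∘ h = zmor Z T GB).
    { transitivity (pr2 P GB GB ∘ pair P p1 q ∘ h); [simp; reflexivity|]. rw Hh. reflexivity. }
    destruct (Hk _ _ H1) as [x [Hx _]].
    assert (x = zmor Z T X).
    { apply c_mono. rewrite <- qk. rewrite <- comp_assoc, Hx, H2. simp. reflexivity. }
    subst x. rewrite <- Hx. simp. reflexivity. }
  split; [exact c_mono|].
  exists GA, p1, q, fA0. split; [|split; [|split]].
  - split; [|split; [|split]].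
    + intros T f g H1 H2. apply jm. simp. rewrite H1, H2. reflexivity.
    + exists i. split; assumption.
    + destruct (lift2 P E p1 p1 (idm GA) (i ∘ p1)) as [sg Hsg]. { rws Hi. reflexivity. }
      fold e in Hsg.
      exists (fE ∘ sg). split.
      * rws E2. rws Hsg. reflexivity.
      * rws qfE. rws Hsg. rws qi. reflexivity.
    + intros T x y Hxy.
      destruct (pb_of_morph Z P E Hprot k p1 i kl (pr1 P GA GA ∘ e) dl fE q HG HW ME T y x
                  (eq_sym Hxy)) as [h [[H1 H2] _]].
      exists (pr2 P GA GA ∘ e ∘ h). split.
      * simp. rewrite <- Heq. rw H2. reflexivity.
      * simp. rewrite <- qfE. rw H1. reflexivity.
  - exact M2.
  - exact qfA.
  - exact (pb_of_morph Z P E Hprot _ _ _ _ _ _ _ _ HG (split_ext_prod Z P X X (idm X)) MA).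
Qed.


Lemma back (S : C) (u : hom S X) : Bourn_normal P (c ∘ u) -> characteristic P u.
Proof.
  intros [Hmq [Q [q1 [q2 [mtq [EQ [Q1 [Q2 PBQ]]]]]]]] Y n [Hmn [R [r1 [r2 [mtn [ER [R1 [R2 PBR]]]]]]]].
  destruct ER as [Rjm [[d [Rd1 Rd2]] [[sr [Rs1 Rs2]] Rtr]]].
  destruct EQ as [Qjm [[dq [Qd1 Qd2]] [[sq [Qs1 Qs2]] Qtr]]].
  destruct Hc as [fA0 MA].
  assert (HK : split_ext Z (mtn ∘ pair P (zmor Z X X) (idm X)) r1 d).
  { split; [exact Rd1|]. split.
    - rws R1. reflexivity.
    - intros T h Hh.
      destruct (PBR T h (zmor Z T X)) as [h' [[Hh1 Hh2] Hu]]. { rewrite Hh. simp. reflexivity. }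
      exists (pr2 P X X ∘ h'). split.
      + simp. rewrite <- Hh1. f_equal. apply pair_ext; simp; [rewrite Hh2|]; reflexivity.
      + intros x' Hx'.
        assert (pair P (zmor Z T X) x' = h').
        { symmetry. apply Hu. split; [rewrite <- Hx'; simp; reflexivity | simp; reflexivity]. }
        subst h'. simp. reflexivity. }
  destruct (gen_ex _ _ _ HK) as [fR [phi MR]].
  assert (MN : split_ext_morph (pair P (zmor Z X X) (idm X)) (pr1 P X X) (pair P (idm X) (idm X))
                 (mtn ∘ pair P (zmor Z X X) (idm X)) r1 d (idm X) mtn n).
  { split; [|split].
    - simp. reflexivity.
    - exact R1.
    - apply Rjm.
      + rws R1. rws Rd1. reflexivity.
      + rws R2. rws Rd2. reflexivity. }
  assert (phin : phi ∘ n = c).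
  { exact (gen_uniq _ _ _ _ _ _ _ (split_ext_prod Z P X X (idm X)) (morph_comp MN MR) MA). }
  assert (umono : mono u).
  { intros T f g H. apply Hmq. rewrite <- !comp_assoc, H. reflexivity. }
  set (e2 := eqz_in E (pair P (phi ∘ r1 ∘ pr1 P R Q) (phi ∘ r2 ∘ pr1 P R Q))
                      (pair P (q1 ∘ pr2 P R Q) (q2 ∘ pr2 P R Q))).
  assert (F : pair P (phi ∘ r1 ∘ pr1 P R Q) (phi ∘ r2 ∘ pr1 P R Q) ∘ e2 =
              pair P (q1 ∘ pr2 P R Q) (q2 ∘ pr2 P R Q) ∘ e2) by apply eqz_eq.
  assert (F1 : phi ∘ r1 ∘ pr1 P R Q ∘ e2 = q1 ∘ pr2 P R Q ∘ e2).
  { transitivity (pr1 P _ _ ∘ (pair P (phi ∘ r1 ∘ pr1 P R Q) (phi ∘ r2 ∘ pr1 P R Q) ∘ e2));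
      [simp; reflexivity|]. rewrite F. simp. reflexivity. }
  assert (F2 : phi ∘ r2 ∘ pr1 P R Q ∘ e2 = q2 ∘ pr2 P R Q ∘ e2).
  { transitivity (pr2 P _ _ ∘ (pair P (phi ∘ r1 ∘ pr1 P R Q) (phi ∘ r2 ∘ pr1 P R Q) ∘ e2));
      [simp; reflexivity|]. rewrite F. simp. reflexivity. }
  assert (LF : forall T (a : hom T R) (b : hom T Q), phi ∘ r1 ∘ a = q1 ∘ b -> phi ∘ r2 ∘ a = q2 ∘ b ->
            exists l, e2 ∘ l = pair P a b).
  { intros T a b Ha Hb. apply eqz_lift. simp. rewrite Ha, Hb. reflexivity. }
  destruct (LF _ (mtn ∘ pair P (u ∘ pr1 P S S) (u ∘ pr2 P S S)) mtq) as [mt' Hmt'].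
  { rws R1. rws phin. rws Q1. reflexivity. }
  { rws R2. rws phin. rws Q2. reflexivity. }
  split.
  { intros T f g H. apply umono, Hmn. rewrite !comp_assoc. exact H. }
  exists (eqz E (pair P (phi ∘ r1 ∘ pr1 P R Q) (phi ∘ r2 ∘ pr1 P R Q))
                      (pair P (q1 ∘ pr2 P R Q) (q2 ∘ pr2 P R Q))),
         (r1 ∘ pr1 P R Q ∘ e2), (r2 ∘ pr1 P R Q ∘ e2), mt'.
  split; [|split; [|split]].
  - split; [|split; [|split]].
    + intros T f g H1 H2. apply emono; fold e2. apply pair_ext.
      * apply Rjm; simp; [exact H1|exact H2].
      * apply Qjm; simp.
        -- rewrite <- F1. rewrite <- !comp_assoc. f_equal. rewrite !comp_assoc. exact H1.
        -- rewrite <- F2. rewrite <- !comp_assoc. f_equal. rewrite !comp_assoc. exact H2.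
    + destruct (LF _ d (dq ∘ phi)) as [l Hl].
      { rws Rd1. rws Qd1. reflexivity. }
      { rws Rd2. rws Qd2. reflexivity. }
      exists l. split; rws Hl; assumption.
    + destruct (LF _ (sr ∘ pr1 P R Q ∘ e2) (sq ∘ pr2 P R Q ∘ e2)) as [l Hl].
      { rws Rs1. rws Qs1. exact F2. }
      { rws Rs2. rws Qs2. exact F1. }
      exists l. split; rws Hl; [rws Rs1|rws Rs2]; reflexivity.
    + intros T x y Hxy. autorewrite with cat in Hxy.
      destruct (Rtr T (pr1 P R Q ∘ e2 ∘ x) (pr1 P R Q ∘ e2 ∘ y)) as [tn [Tn1 Tn2]].
      { simp. exact Hxy. }
      destruct (Qtr T (pr2 P R Q ∘ e2 ∘ x) (pr2 P R Q ∘ e2 ∘ y)) as [tq [Tq1 Tq2]].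
      { simp. rewrite <- F1, <- F2. rewrite <- !comp_assoc. f_equal. rewrite !comp_assoc. exact Hxy. }
      autorewrite with cat in Tn1, Tn2, Tq1, Tq2.
      destruct (LF _ tn tq) as [l Hl].
      { rws Tn1. rws F1. rws Tq1. reflexivity. }
      { rws Tn2. rws F2. rws Tq2. reflexivity. }
      exists l. split; rws Hl; [exact Tn1|exact Tn2].
  - rws Hmt'. rws R1. reflexivity.
  - rws Hmt'. rws R2. reflexivity.
  - intros T x y Hxy. autorewrite with cat in Hxy.
    destruct (PBR T (pr1 P R Q ∘ e2 ∘ x) (u ∘ y)) as [h1 [[Ha1 Ha2] _]]. { simp. exact Hxy. }
    destruct (PBQ T (pr2 P R Q ∘ e2 ∘ x) y) as [h2 [[Hb1 Hb2] Hbu]].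
    { simp. rewrite <- F1. rw Hxy. rw phin. reflexivity. }
    assert (Hh : pair P (u ∘ pr1 P S S) (u ∘ pr2 P S S) ∘ h2 = h1).
    { apply pair_ext; simp.
      - rw Hb2. rewrite Ha2. reflexivity.
      - apply c_mono. simp. rewrite <- Q2. rw Hb1. rewrite <- F2.
        rw (eq_sym Ha1). rw R2. rw phin. reflexivity. }
    exists h2. split; [split|].
    + apply emono; fold e2. apply pair_ext; simp.
      * rw Hmt'. autorewrite with cat in Hh. rw Hh. rewrite Ha1. reflexivity.
      * rw Hmt'. exact Hb1.
    + exact Hb2.
    + intros h [H1 H2]. apply Hbu. split; [|exact H2].
      rewrite <- H1. rws Hmt'. reflexivity.
Qed.
End Main.

Theorem theorem5p3 (C : Cat) (Z : Pointed C) (P : Products C) (E : Equalizers C)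
  (Hprot : protomodular Z)
  (X : C) (Hcen : trivial_center Z P X)
  (GA GB : C) (k : hom X GA) (p1 : hom GA GB) (i : hom GB GA)
  (Hgen : is_generic_split_ext Z k p1 i)
  (c : hom X GB) (Hc : is_conjugation Z P k p1 i c)
  (S : C) (u : hom S X) :
  characteristic P u <-> Bourn_normal P (c ∘ u).
Proof.
  split.
  - intros H. apply H. exact (c_normal Z P E Hprot X Hcen GA GB k p1 i Hgen c Hc).
  - exact (back Z P E Hprot X Hcen GA GB k p1 i Hgen c Hc S u).
Qed.
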